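(* Let $\mathcal{I}$ be an ideal on $\omega$. If $\mathcal{ED}\le_{\mathrm{K}}\mathcal{I}$, then Player II has a winning strategy in the tallness* game with respect to $\mathcal{I}$.
   Context: Ideals on $\omega$ are assumed to contain all finite sets; $\mathcal{I}^+=\mathcal{P}(\omega)\setminus\mathcal{I}$. $\mathcal{ED}$ is the ideal on $\omega\times\omega$ generated by the vertical lines $\{n\}\times\omega$ and the graphs of functions from $\omega$ to $\omega$. For ideals $\mathcal{J}$ on $X$ and $\mathcal{I}$ on $Y$, $\mathcal{J}\le_{\mathrm{K}}\mathcal{I}$ (Katětov order) means there is a function $f:Y\to X$ with $f^{-1}(J)\in\mathcal{I}$ for every $J\in\mathcal{J}$. Tallness* game with respect to $\mathcal{I}$: at round $k$, Player I plays $n_k\in\omega$ with $n_0<n_1<\cdots$, then Player II plays $i_k\in\{0,1\}$. Player II wins iff either $\{n_k:k\in\omega\}\in\mathcal{I}$, or ($\{n_k:k\in\omega\}\in\mathcal{I}^+$ and $\{n_k:i_k=1\}$ is infinite and belongs to $\mathcal{I}$). *)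

(* Defs.v *)
From Stdlib Require Import List Arith.
Import ListNotations.

Definition finite_nat (A : nat -> Prop) : Prop :=
  exists N, forall x, A x -> x < N.

Definition infinite_nat (A : nat -> Prop) : Prop := ~ finite_nat A.

Definition is_ideal (I : (nat -> Prop) -> Prop) : Prop :=
  (forall A, finite_nat A -> I A) /\
  (forall A B, I B -> (forall x, A x -> B x) -> I A) /\
  (forall A B, I A -> I B -> I (fun x => A x \/ B x)) /\
  ~ I (fun _ => True).

(* The ideal ED on omega x omega generated by vertical lines {n} x omega
   and graphs of functions omega -> omega: A is in ED iff A is covered by
   finitely many vertical lines and finitely many graphs. *)
Definition ED (A : nat * nat -> Prop) : Prop :=
  exists (N : nat) (fs : list (nat -> nat)),
    forall p, A p -> fst p < N \/ exists f, In f fs /\ snd p = f (fst p).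

Definition katetov_le {X Y : Type} (J : (X -> Prop) -> Prop)
  (I : (Y -> Prop) -> Prop) : Prop :=
  exists f : Y -> X, forall A, J A -> I (fun y => A (f y)).

(* A strategy of Player II maps the finite sequence of
   Player I's moves (n_0, ..., n_k) (oldest first) to i_k (true = 1).
   (Player II's own previous moves are determined by the strategy.) *)
Definition strategyII := list nat -> bool.

Definition strictly_increasing (n : nat -> nat) : Prop :=
  forall k, n k < n (S k).

Definition reply (sigma : strategyII) (n : nat -> nat) (k : nat) : bool :=
  sigma (map n (seq 0 (S k))).

Definition II_wins_play (I : (nat -> Prop) -> Prop) (sigma : strategyII)
  (n : nat -> nat) : Prop :=
  let R := fun x => exists k, n k = x in
  let R1 := fun x => exists k, n k = x /\ reply sigma n k = true in
  I R \/ (~ I R /\ infinite_nat R1 /\ I R1).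

Definition II_winning_strategy (I : (nat -> Prop) -> Prop)
  (sigma : strategyII) : Prop :=
  forall n, strictly_increasing n -> II_wins_play I sigma n.

Definition II_has_winning_strategy (I : (nat -> Prop) -> Prop) : Prop :=
  exists sigma, II_winning_strategy I sigma.

(* Main.v *)
Require Import Defs.
From Stdlib Require Import List Arith Lia Classical ClassicalEpsilon.
Import ListNotations.

Section S.
Variable f : nat -> nat * nat.

Definition col (x : nat) := fst (f x).

Definition sig0 : strategyII := fun l =>
  match rev l with
  | [] => false
  | x :: t => negb (existsb (fun y => Nat.eqb (col y) (col x)) t)
  end.

Lemma reply_spec n k :
  reply sig0 n k = negb (existsb (fun y => Nat.eqb (col y) (col (n k))) (rev (map n (seq 0 k)))).
Proof.
  unfold reply, sig0. rewrite seq_S, map_app, rev_app_distr. simpl. reflexivity.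
Qed.

Lemma reply_true n k : reply sig0 n k = true -> forall j, j < k -> col (n j) <> col (n k).
Proof.
  rewrite reply_spec. intros H j Hj E.
  assert (existsb (fun y => Nat.eqb (col y) (col (n k))) (rev (map n (seq 0 k))) = true).
  { apply existsb_exists. exists (n j). split.
    - apply -> in_rev. apply in_map. apply in_seq. lia.
    - apply Nat.eqb_eq; auto. }
  rewrite H0 in H. discriminate.
Qed.

Lemma reply_false n k : reply sig0 n k = false -> exists j, j < k /\ col (n j) = col (n k).
Proof.
  rewrite reply_spec. intros H.
  destruct (existsb _ _) eqn:E; [|discriminate].
  apply existsb_exists in E. destruct E as [y [Hy Hy2]].
  apply in_rev in Hy. apply in_map_iff in Hy. destruct Hy as [j [<- Hj]].
  apply in_seq in Hj. exists j. split; [lia|]. apply Nat.eqb_eq; auto.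
Qed.

Lemma reply_first n : forall k, exists j, reply sig0 n j = true /\ col (n j) = col (n k).
Proof.
  intro k. induction k as [k IH] using lt_wf_ind.
  destruct (reply sig0 n k) eqn:E.
  - exists k; auto.
  - destruct (reply_false n k E) as [j [Hj Hc]].
    destruct (IH j Hj) as [j' [H1 H2]]. exists j'. split; auto. congruence.
Qed.

Lemma reply_unique n j j' : reply sig0 n j = true -> reply sig0 n j' = true ->
  col (n j) = col (n j') -> j = j'.
Proof.
  intros H1 H2 E. destruct (lt_eq_lt_dec j j') as [[h|h]|h]; auto.
  - exfalso. exact (reply_true n j' H2 j h E).
  - exfalso. exact (reply_true n j H1 j' h (eq_sym E)).
Qed.

Fixpoint mx (N : nat) : nat := match N with 0 => 0 | S N => max (mx N) (col N) end.

Lemma mx_spec N x : x < N -> col x <= mx N.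
Proof.
  induction N; intros H; [lia|]. simpl. destruct (Nat.eq_dec x N); subst; [lia|].
  specialize (IHN ltac:(lia)). lia.
Qed.
End S.

Theorem mainTheorem16 (I : (nat -> Prop) -> Prop) :
  is_ideal I -> katetov_le ED I -> II_has_winning_strategy I.
Proof.
  intros [Hfin [Hher [Hun Hprop]]] [f Hf].
  exists (sig0 f). intros n _. unfold II_wins_play.
  destruct (classic (I (fun x => exists k, n k = x))) as [HR|HR]; [left; exact HR|].
  right. split; [exact HR|]. split.
  - intros [N HN]. apply HR.
    apply (Hher _ (fun y => fst (f y) < S (mx f N))).
    + apply (Hf (fun p => fst p < S (mx f N))). exists (S (mx f N)), []. intros p Hp; left; exact Hp.
    + intros x [k <-]. destruct (reply_first f n k) as [j [H1 H2]].
      assert (n j < N) by (apply HN; exists j; auto).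
      pose proof (mx_spec f N (n j) H). unfold col in *. lia.
  - set (g := fun a => match excluded_middle_informative
               (exists j, reply (sig0 f) n j = true /\ col f (n j) = a) with
            | left H => snd (f (n (proj1_sig (constructive_indefinite_description _ H))))
            | right _ => 0 end).
    apply (Hher _ (fun y => (fun p : nat * nat => fst p < 0 \/ exists h, In h [g] /\ snd p = h (fst p)) (f y))).
    + apply (Hf (fun p : nat * nat => fst p < 0 \/ exists h, In h [g] /\ snd p = h (fst p))). exists 0, [g]. intros p Hp; exact Hp.
    + intros x [k [<- Hk]]. right. exists g. split; [left; reflexivity|].
      unfold g. destruct excluded_middle_informative as [H|H].
      * destruct (constructive_indefinite_description _ H) as [j [Hj Hc]]. simpl.
        assert (j = k) by (apply (reply_unique f n); auto). subst. reflexivity.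
      * exfalso. apply H. exists k. split; auto.
Qed.
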